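(* Let $m,n\ge 2$ be integers not divisible by $3$. Every closed toroidal 1-form $f\,dx+g\,dy$ can be written uniquely in the form $r\,dx+s\,dy+\omega$ where $r,s\in\mathbb{F}_3$ (viewed as constant functions) and $\omega$ is an exact toroidal 1-form; that is, there exist unique $r,s\in\mathbb{F}_3$ and a unique exact toroidal 1-form $\omega=u\,dx+w\,dy$ with $f=r+u$ and $g=s+w$.
   Context: A function $h:\mathbb{Z}\times\mathbb{Z}\to\mathbb{F}_3$ is doubly periodic if $h_{i+m,j}=h_{i,j+n}=h_{i,j}$ for all $i,j\in\mathbb{Z}$. Its partial derivatives are $(D_xh)_{i,j}=h_{i+1,j}-h_{i,j}$ and $(D_yh)_{i,j}=h_{i,j+1}-h_{i,j}$ (again doubly periodic). A toroidal 1-form is a formal expression $f\,dx+g\,dy$ with $f,g:\mathbb{Z}\times\mathbb{Z}\to\mathbb{F}_3$ doubly periodic; it is closed if $D_yf=D_xg$, and exact if $f=D_xh$, $g=D_yh$ for some doubly periodic $h:\mathbb{Z}\times\mathbb{Z}\to\mathbb{F}_3$. *)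

(* Defs.v *)
From mathcomp Require Import all_boot all_algebra.
Set Implicit Arguments. Unset Strict Implicit. Unset Printing Implicit Defensive.
Import GRing.Theory.
Local Open Scope ring_scope.

Definition F3 := 'F_3.
Definition grid := int -> int -> F3.

Definition doubly_periodic (m n : nat) (h : grid) : Prop :=
  forall i j : int, h (i + m%:Z) j = h i j /\ h i (j + n%:Z) = h i j.

Definition Dx (h : grid) : grid := fun i j => h (i + 1) j - h i j.
Definition Dy (h : grid) : grid := fun i j => h i (j + 1) - h i j.

(* A toroidal 1-form f dx + g dy is represented by the pair (f, g). *)
Definition toroidal_form (m n : nat) (f g : grid) : Prop :=
  doubly_periodic m n f /\ doubly_periodic m n g.

Definition closed_form (f g : grid) : Prop := Dy f = Dx g.

Definition exact_form (m n : nat) (f g : grid) : Prop :=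
  exists h : grid, doubly_periodic m n h /\ f = Dx h /\ g = Dy h.

Definition cst (c : F3) : grid := fun _ _ => c.

Definition addg (a b : grid) : grid := fun i j => a i j + b i j.

(* Main.v *)
Require Import Defs.
From mathcomp Require Import all_boot all_algebra.
From mathcomp Require Import ring.
From Stdlib Require Import FunctionalExtensionality.
Import GRing.Theory Num.Theory.
Local Open Scope ring_scope.

Lemma per_mul (m : nat) (p : int -> F3) : (forall x, p (x + m%:Z) = p x) ->
  forall x (k : int), p (x + k * m%:Z) = p x.
Proof.
move=> hp x k.
have hn : forall (n : nat) y, p (y + n%:Z * m%:Z) = p y.
  elim=> [|n IH] y; first by rewrite mul0r addr0.
  by rewrite -addn1 PoszD mulrDl mul1r addrA hp IH.
case: k => n; first exact: hn.
by rewrite NegzE mulNr -(hn n.+1 (x - _)) subrK.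
Qed.

Lemma per_mod (m : nat) (p : int -> F3) : (0 < m)%N -> (forall x, p (x + m%:Z) = p x) ->
  forall x, p (x %% m%:Z)%Z = p x.
Proof.
move=> m0 hp x.
by rewrite [in RHS](divz_eq x m) addrC per_mul.
Qed.

Definition Hn (F G : grid) (a b : nat) : F3 :=
  \sum_(k < a) F k%:Z 0 + \sum_(l < b) G a%:Z l%:Z.

Lemma PoszS (k : nat) : (k.+1)%:Z = k%:Z + 1.
Proof. by rewrite -addn1 PoszD. Qed.

Lemma telG (F G : grid) (cl : forall i j, F i (j+1) - F i j = G (i+1) j - G i j) a b :
  \sum_(l < b) G a.+1%:Z l%:Z - \sum_(l < b) G a%:Z l%:Z = F a b - F a 0.
Proof.
rewrite -sumrB.
rewrite (eq_bigr (fun l : 'I_b => F a%:Z (l.+1)%:Z - F a l)) => [|l _]; last first.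
  by rewrite !PoszS cl.
rewrite -(big_mkord xpredT (fun l : nat => F a%:Z (l.+1)%:Z - F a l)).
by rewrite telescope_sumr.
Qed.

Lemma Hx (F G : grid) (cl : forall i j, F i (j+1) - F i j = G (i+1) j - G i j) a b :
  Hn F G a.+1 b - Hn F G a b = F a b.
Proof.
rewrite /Hn big_ord_recr /=.
have e := telG F G cl a b.
have -> : \sum_(l < b) G a.+1%:Z l%:Z = F a b - F a 0 + \sum_(l < b) G a%:Z l%:Z.
  by rewrite -e subrK.
ring.
Qed.

Lemma Hy (F G : grid) a b : Hn F G a b.+1 - Hn F G a b = G a b.
Proof. rewrite /Hn big_ord_recr /=; ring. Qed.

Lemma sum_Dx (h : grid) (m : nat) : (forall i j, h (i + m%:Z) j = h i j) ->
  \sum_(k < m) Dx h k%:Z 0 = 0.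
Proof.
move=> hp; rewrite /Dx.
rewrite (eq_bigr (fun k : 'I_m => h (k.+1)%:Z 0 - h k 0)) => [|k _]; last by rewrite PoszS.
rewrite -(big_mkord xpredT (fun k : nat => h (k.+1)%:Z 0 - h k 0)) telescope_sumr //.
by rewrite -[Posz m]add0r hp subrr.
Qed.

Lemma sum_Dy (h : grid) (n : nat) : (forall i j, h i (j + n%:Z) = h i j) ->
  \sum_(k < n) Dy h 0 k%:Z = 0.
Proof.
move=> hp; rewrite /Dy.
rewrite (eq_bigr (fun k : 'I_n => h 0 (k.+1)%:Z - h 0 k)) => [|k _]; last by rewrite PoszS.
rewrite -(big_mkord xpredT (fun k : nat => h 0 (k.+1)%:Z - h 0 k)) telescope_sumr //.
by rewrite -[Posz n]add0r hp subrr.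
Qed.

Theorem mainTheorem3 (m n : nat) (hm : (2 <= m)%N) (hn : (2 <= n)%N)
  (hm3 : ~~ (3 %| m)%N) (hn3 : ~~ (3 %| n)%N) (f g : grid) :
  toroidal_form m n f g -> closed_form f g ->
  exists (r s : F3) (u w : grid),
    (toroidal_form m n u w /\ exact_form m n u w /\
     f = addg (cst r) u /\ g = addg (cst s) w) /\
    forall (r' s' : F3) (u' w' : grid),
      toroidal_form m n u' w' -> exact_form m n u' w' ->
      f = addg (cst r') u' -> g = addg (cst s') w' ->
      r' = r /\ s' = s /\ u' = u /\ w' = w.
Proof.
move=> [pf pg] cl.
have m0 : m%:R != 0 :> F3 by rewrite -(dvdn_pcharf (pchar_Fp _)).
have n0 : n%:R != 0 :> F3 by rewrite -(dvdn_pcharf (pchar_Fp _)).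
have mp : (0 < m)%N by apply: leq_trans hm.
have np : (0 < n)%N by apply: leq_trans hn.
have pfx i j : f (i + m%:Z) j = f i j by case: (pf i j).
have pfy i j : f i (j + n%:Z) = f i j by case: (pf i j).
have pgx i j : g (i + m%:Z) j = g i j by case: (pg i j).
have pgy i j : g i (j + n%:Z) = g i j by case: (pg i j).
pose r : F3 := (\sum_(k < m) f k%:Z 0) / m%:R.
pose s : F3 := (\sum_(l < n) g 0 l%:Z) / n%:R.
pose F : grid := fun i j => f i j - r.
pose G : grid := fun i j => g i j - s.
have clF i j : F i (j+1) - F i j = G (i+1) j - G i j.
  have c := congr1 (fun h => h i j) cl; rewrite /Dx /Dy /= in c.
  rewrite /F /G; transitivity (f i (j+1) - f i j); first ring.
  rewrite c; ring.
have sumF : \sum_(k < m) F k%:Z 0 = 0.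
  by rewrite /F sumrB sumr_const card_ord -mulr_natr /r divfK // subrr.
have Fx i j : F (i + m%:Z) j = F i j by rewrite /F pfx.
have Fy i j : F i (j + n%:Z) = F i j by rewrite /F pfy.
have Gx i j : G (i + m%:Z) j = G i j by rewrite /G pgx.
have Gy i j : G i (j + n%:Z) = G i j by rewrite /G pgy.
have sumG : forall a : nat, \sum_(l < n) G a%:Z l%:Z = 0.
  elim=> [|a IH].
    by rewrite /G sumrB sumr_const card_ord -mulr_natr /s divfK // subrr.
  have e := telG F G clF a n.
  rewrite IH subr0 in e.
  by rewrite e -[Posz n]add0r Fy subrr.
have Fmod i j : F (i %% m%:Z)%Z (j %% n%:Z)%Z = F i j.
  rewrite (@per_mod m (fun x => F x (j %% n%:Z)%Z) mp) => [|x]; last exact: Fx.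
  exact: (@per_mod n (fun y => F i y) np).
have Gmod i j : G (i %% m%:Z)%Z (j %% n%:Z)%Z = G i j.
  rewrite (@per_mod m (fun x => G x (j %% n%:Z)%Z) mp) => [|x]; last exact: Gx.
  exact: (@per_mod n (fun y => G i y) np).
pose h : grid := fun i j => Hn F G (absz (i %% m%:Z)%Z) (absz (j %% n%:Z)%Z).
have absm i : (absz (i %% m%:Z)%Z)%:Z = (i %% m%:Z)%Z.
  by apply: gez0_abs; apply: modz_ge0; rewrite eqz_nat -lt0n.
have absn j : (absz (j %% n%:Z)%Z)%:Z = (j %% n%:Z)%Z.
  by apply: gez0_abs; apply: modz_ge0; rewrite eqz_nat -lt0n.
have ltm i : (absz (i %% m%:Z)%Z < m)%N.
  by rewrite -ltz_nat absm ltz_pmod.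
have ltn' j : (absz (j %% n%:Z)%Z < n)%N.
  by rewrite -ltz_nat absn ltz_pmod.
have keyx : forall a b : nat, (a < m)%N ->
    Hn F G (absz ((a%:Z + 1) %% m%:Z)%Z) b - Hn F G a b = F a b.
  move=> a b lt; case: (ltnP a.+1 m) => h1.
    rewrite -PoszS modz_small /=; first exact: (Hx F G clF a b).
    by rewrite ltz_nat.
  have em : m = a.+1 by apply/eqP; rewrite eqn_leq h1 lt.
  rewrite -PoszS -em modzz /=.
  have -> : Hn F G 0 b = Hn F G m b.
    rewrite /Hn big_ord0 sumF !add0r; apply: eq_bigr => l _.
    by rewrite -[Posz m]add0r Gx.
  rewrite {1}em; exact: (Hx F G clF a b).
have keyy : forall a b : nat, (b < n)%N ->
    Hn F G a (absz ((b%:Z + 1) %% n%:Z)%Z) - Hn F G a b = G a b.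
  move=> a b lt; case: (ltnP b.+1 n) => h1.
    rewrite -PoszS modz_small /=; first exact: (Hy F G a b).
    by rewrite ltz_nat.
  have em : n = b.+1 by apply/eqP; rewrite eqn_leq h1 lt.
  rewrite -PoszS -em modzz /=.
  have -> : Hn F G a 0 = Hn F G a n.
    by rewrite /Hn big_ord0 sumG.
  rewrite {1}em; exact: (Hy F G a b).
have HxF : Dx h = F.
  apply: functional_extensionality => i; apply: functional_extensionality => j.
  rewrite /Dx /h.
  have -> : ((i + 1) %% m%:Z)%Z = (((absz (i %% m%:Z)%Z)%:Z + 1) %% m%:Z)%Z.
    by rewrite absm modzDml.
  by rewrite keyx ?ltm // absm absn Fmod.
have HyG : Dy h = G.
  apply: functional_extensionality => i; apply: functional_extensionality => j.
  rewrite /Dy /h.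
  have -> : ((j + 1) %% n%:Z)%Z = (((absz (j %% n%:Z)%Z)%:Z + 1) %% n%:Z)%Z.
    by rewrite absn modzDml.
  by rewrite keyy ?ltn' // absm absn Gmod.
have hper : doubly_periodic m n h.
  by move=> i j; rewrite /h !modzDr.
exists r, s, F, G; split.
  split; first by split => i j; split; [exact: Fx|exact: Fy|exact: Gx|exact: Gy].
  split; first by exists h; split => //; split.
  split; apply: functional_extensionality => i; apply: functional_extensionality => j;
    rewrite /addg /cst /F /G; ring.
move=> r' s' u' w' [pu' pw'] [k [pk [eu ew]]] ef eg.
have e1 i j : f i j = r' + u' i j by rewrite ef.
have e2 i j : g i j = s' + w' i j by rewrite eg.
have hkx i j : k (i + m%:Z) j = k i j by case: (pk i j).
have hky i j : k i (j + n%:Z) = k i j by case: (pk i j).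
have er : r' = r.
  apply: (mulIf m0); rewrite !mulr_natr.
  have S1 : \sum_(i < m) f i%:Z 0 = r' *+ m.
    under eq_bigr => i _ do rewrite e1.
    by rewrite big_split /= sumr_const card_ord eu sum_Dx // addr0.
  have S2 : r *+ m = \sum_(i < m) f i%:Z 0 by rewrite -mulr_natr /r divfK.
  by rewrite S2 S1.
have es : s' = s.
  apply: (mulIf n0); rewrite !mulr_natr.
  have S1 : \sum_(i < n) g 0 i%:Z = s' *+ n.
    under eq_bigr => i _ do rewrite e2.
    by rewrite big_split /= sumr_const card_ord ew sum_Dy // addr0.
  have S2 : s *+ n = \sum_(i < n) g 0 i%:Z by rewrite -mulr_natr /s divfK.
  by rewrite S2 S1.
split => //; split => //; split; apply: functional_extensionality => i;
  apply: functional_extensionality => j.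
  rewrite /F e1 er; ring.
rewrite /G e2 es; ring.
Qed.
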